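(* Let $x_1,\dots,x_n\in[0,1]^2$ and $r,s$ with $0<s<r^2/10^{10}$ (and $r\ge s$) be such that $(x_1,\dots,x_n;r,s)$ satisfies condition (M). Then $c(G(x_1,\dots,x_n;r))\le 2$.
   Context: For $V=\{x_1,\dots,x_n\}\subset[0,1]^2$ and $r\ge s>0$, the tuple $(x_1,\dots,x_n;r,s)$ satisfies condition (M) if for every $x\in[0,1]^2$ and every $y\in B(x,r)\cap[0,1]^2$ we have $V\cap B(x,r)\cap B(y,s)\neq\emptyset$, where $B(x,\rho)$ is the closed Euclidean ball. $G(x_1,\dots,x_n;r)$ is the geometric graph on vertices $x_1,\dots,x_n$ with $x_i,x_j$ adjacent iff $\|x_i-x_j\|\le r$. The cop number $c(G)$ is the minimum number of cops that have a strategy guaranteeing capture of the robber in finite time in the standard cops and robbers game (agents alternately move along an edge or stay put; full information; capture means a cop occupies the robber's vertex). *)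

(* Defs.v *)
From Stdlib Require Import Reals Lra.
Open Scope R_scope.

Definition pt := (R * R)%type.

Definition edist (p q : pt) : R :=
  sqrt ((fst p - fst q) ^ 2 + (snd p - snd q) ^ 2).

Definition in_unit_square (p : pt) : Prop :=
  0 <= fst p <= 1 /\ 0 <= snd p <= 1.

Definition in_ball (c : pt) (rho : R) (p : pt) : Prop := edist c p <= rho.

Definition condM (n : nat) (x : nat -> pt) (r s : R) : Prop :=
  forall p q : pt, in_unit_square p -> in_unit_square q -> in_ball p r q ->
    exists i : nat, (i < n)%nat /\ in_ball p r (x i) /\ in_ball q s (x i).

(** Geometric graph G(x_0..x_{n-1}; r): vertices are the indices 0..n-1,
    i ~ j iff ||x_i - x_j|| <= r. *)
Definition geo_adj (x : nat -> pt) (r : R) (i j : nat) : Prop :=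
  edist (x i) (x j) <= r.

(** Cops and robbers on a graph with vertex set {0..n-1} and adjacency E,
    played with k cops (cop j, j < k, sits at vertex c j). *)
Section CopsRobbers.
Variables (n : nat) (E : nat -> nat -> Prop) (k : nat).

Definition captured (c : nat -> nat) (rb : nat) : Prop :=
  exists j, (j < k)%nat /\ c j = rb.

Definition cop_move (c c' : nat -> nat) : Prop :=
  forall j, (j < k)%nat -> (c' j < n)%nat /\ (c' j = c j \/ E (c j) (c' j)).

Definition rob_move (rb rb' : nat) : Prop :=
  (rb' < n)%nat /\ (rb' = rb \/ E rb rb').

(** [CopTurn c rb]: cops to move, and the cops can force capture in finitely
    many moves; [RobTurn c rb]: same, robber to move.  Inductive = finite time. *)
Inductive CopTurn : (nat -> nat) -> nat -> Prop :=
| ct_cap : forall c rb, captured c rb -> CopTurn c rb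
| ct_move : forall c c' rb, cop_move c c' -> RobTurn c' rb -> CopTurn c rb
with RobTurn : (nat -> nat) -> nat -> Prop :=
| rt_cap : forall c rb, captured c rb -> RobTurn c rb
| rt_move : forall c rb,
    (forall rb', rob_move rb rb' -> CopTurn c rb') -> RobTurn c rb.

Definition cops_win : Prop :=
  exists c : nat -> nat, (forall j, (j < k)%nat -> (c j < n)%nat) /\
    forall rb, (rb < n)%nat -> CopTurn c rb.

End CopsRobbers.

Definition cop_number_le (n : nat) (E : nat -> nat -> Prop) (m : nat) : Prop :=
  exists k, (k <= m)%nat /\ cops_win n E k.

(* Main.v *)
Require Import Defs.
From Stdlib Require Import Reals.
From Stdlib Require Import Lra Psatz Arith ZArith.
Open Scope R_scope.


Lemma abs_le_iff x a : Rabs x <= a <-> -a <= x <= a.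
Proof. unfold Rabs; destruct (Rcase_abs x); split; intros; lra. Qed.

Lemma ge_of_sq c V : 0 <= V -> c*c <= V*V -> c <= V.
Proof. intros. destruct (Rle_dec c 0). lra. nra. Qed.

Lemma lt_of_sq c V : 0 <= c -> 0 <= V -> V*V < c*c -> V < c.
Proof. intros. nra. Qed.

Lemma side r s eps px py X0 Y0 X Y :
  0 < r -> 0 < s -> s <= r/1000000 -> 0 <= eps <= r/1000 ->
  -eps <= Y0 - py <= eps -> X0 - px >= r/10 - s ->
  (X-X0)^2+(Y-Y0)^2 <= r^2 -> (X-px)^2+(Y-py)^2 > r^2 -> X - px >= 0.
Proof.
  intros Hr Hs Hs1 He He0 Hg Hm Hn.
  destruct (Rge_dec (X-px) 0) as [|Hneg]; [assumption|exfalso].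
  set (a := X - X0) in *. set (b := Y - Y0) in *. set (e := Y0 - py) in *.
  set (g := X0 - px) in *.
  assert (Hgp : X - px = g + a) by (unfold g, a; ring).
  assert (Hdy : Y - py = e + b) by (unfold e, b; ring).
  rewrite Hgp, Hdy in Hn. rewrite Hgp in Hneg.
  assert (Hb : b*b <= r*r) by nra.
  assert (Hb2 : -r <= b <= r) by nra.
  assert (H1 : (g+a)^2 <= a^2 - g^2) by nra.
  assert (H2 : (e+b)^2 <= b^2 + 2*r*eps + eps^2) by nra.
  assert (H3 : g^2 >= (r/10 - s)^2) by nra.
  nra.
Qed.

Definition cinv (r s eps px py X0 Y0 : R) : Prop :=
  (px <= s \/ X0 - px >= r/10 - s) /\
  (Rabs (Y0 - py) <= eps \/ (px <= eps /\ Y0 - py > eps)).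

Definition phi (eps px py X0 Y0 : R) : R :=
  if Rle_dec (Rabs (Y0 - py)) eps then 1 - px else 3 - py.

Lemma sq_le h r : -r <= h <= r -> h*h <= r*r.
Proof. intros. nra. Qed.

Lemma Vbig r s h V : 0 < s <= r -> h*h <= s*s -> V*V = r^2 - h^2 -> 0<=V -> r - s <= V.
Proof. intros. apply ge_of_sq; [lra|]. simpl in *. nra. Qed.

Lemma sum_sq_le u w s : 0 <= s -> u^2 + w^2 <= s^2 -> -s <= u <= s /\ -s <= w <= s.
Proof. intros. split; split; nra. Qed.

Lemma P3_hard r s eps a b e h V gp :
  0<r -> 0<s -> s<=r/1000000 -> 0<=eps<=r/1000 -> a*a+b*b <= r*r ->
  -eps<=e<=eps -> 0<=gp -> gp < r/10 -> gp*gp + (e+b)*(e+b) > r*r -> a < 0 ->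
  -h <= s - a -> h < 0 -> V*V = r*r - h*h -> 0<=V -> b*b <= (V+s)*(V+s).
Proof.
  intros.
  assert (K1 : (e+b)*(e+b) > 99/100*r*r) by nra.
  assert (K2 : b*b >= 97/100*r*r).
  { destruct (Rle_dec 0 b).
    - assert (e + b >= 0) by (destruct (Rle_dec 0 (e+b)); [lra|]; nra).
      assert (99/100*r < e+b) by (apply lt_of_sq; nra).
      nra.
    - assert (e + b <= 0) by (destruct (Rle_dec (e+b) 0); [lra|]; nra).
      assert (99/100*r < -(e+b)) by (apply lt_of_sq; nra).
      nra. }
  assert (K3 : a*a <= 3/100*r*r) by nra.
  assert (K4 : -a < 2/10*r) by (apply lt_of_sq; nra).
  assert (K5 : h*h <= (s-a)*(s-a)) by nra.
  assert (K6 : 9/10*r <= V) by (apply ge_of_sq; nra).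
  nra.
Qed.



Lemma sq_drop u w c : u^2 + w^2 <= c -> w*w <= c.
Proof. intros. nra. Qed.

Lemma sq_bound b c : 0 <= c -> b*b <= c*c -> -c <= b <= c.
Proof. intros. split; nra. Qed.

Lemma nc_beta g dy r B : g^2 + dy^2 > r^2 -> B = r^2 - dy^2 -> B < g*g.
Proof. intros. simpl in *. nra. Qed.

Lemma nc_beta2 g dy r B s : -s <= g -> g < 0 -> g^2 + dy^2 > r^2 -> B = r^2 - dy^2 -> B < s*s.
Proof. intros. simpl in *. nra. Qed.

Lemma dyV dy r beta h V : beta*beta = r^2 - dy^2 -> 0 <= h -> h <= beta ->
  V*V = r^2 - h^2 -> dy*dy <= V*V /\ (-dy)*(-dy) <= V*V.
Proof. intros. simpl in *. split; nra. Qed.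

Lemma bVs b r V s : b*b <= r*r -> 0 < r -> 0 <= s -> r - s <= V -> b*b <= (V+s)*(V+s).
Proof. intros. nra. Qed.

Lemma sq_eq_r V r : 0 <= V -> 0 < r -> V*V = r*r -> V = r.
Proof. intros. nra. Qed.

Lemma vV v V dy : 0 <= V -> ((-V <= dy <= V /\ v = dy) \/ (dy > V /\ v = V) \/ (dy < -V /\ v = -V)) ->
  v*v <= V*V.
Proof. intros H [[A E]|[[A E]|[A E]]]; subst; nra. Qed.

Lemma dy2b e b eps r : -eps <= e <= eps -> 0 <= eps <= r/1000 -> 0 < r -> b^2 <= r^2/2 ->
  (e+b)*(e+b) <= 51/100*r*r.
Proof. intros. simpl in *. assert (-r <= b <= r) by (split; nra). nra. Qed.

Lemma dy2_le dy r : dy*dy <= 51/100*r*r -> dy^2 <= r^2.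
Proof. intros. simpl. nra. Qed.

Lemma beta_big beta r dy : beta*beta = r^2 - dy^2 -> dy*dy <= 51/100*r*r -> 0 < r -> 0 <= beta ->
  7/10*r <= beta.
Proof. intros. apply ge_of_sq; [lra|]. simpl in *; nra. Qed.

Lemma P3_hard_call (r s eps X0 Y0 X Y px py h V : R) :
  (X - X0)^2 + (Y - Y0)^2 <= r^2 -> (X-px)^2+(Y-py)^2 > r^2 -> V*V = r^2 - h^2 ->
  (X-X0)*(X-X0)+(Y-Y0)*(Y-Y0) <= r*r /\ (X-px)*(X-px) + (Y0-py+(Y-Y0))*(Y0-py+(Y-Y0)) > r*r /\ V*V = r*r - h*h.
Proof. intros. simpl in *. replace (Y0-py+(Y-Y0)) with (Y-py) by ring. lra. Qed.

Lemma sqrt_facts z : 0 <= sqrt z /\ (0 <= z -> sqrt z * sqrt z = z) /\ (z <= 0 -> sqrt z = 0).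
Proof. split; [apply sqrt_pos|split; [apply sqrt_sqrt|apply sqrt_neg_0]]. Qed.

Lemma cop_step (r s eps px py X0 Y0 X Y : R) :
  0 < r -> r <= 3/2 -> 0 < s -> s <= r/1000000 -> s <= eps -> eps <= r/1000 ->
  0<=px<=1 -> 0<=py<=1 -> 0<=X0<=1 -> 0<=Y0<=1 -> 0<=X<=1 -> 0<=Y<=1 ->
  (X-X0)^2 + (Y-Y0)^2 <= r^2 ->
  cinv r s eps px py X0 Y0 ->
  (X-px)^2+(Y-py)^2 > r^2 ->
  exists tx ty, (0<=tx<=1 /\ 0<=ty<=1) /\ (tx-px)^2+(ty-py)^2 <= r^2 /\
   forall qx qy, 0<=qx<=1 -> 0<=qy<=1 -> (qx-tx)^2+(qy-ty)^2 <= s^2 ->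
     cinv r s (eps+2*s) qx qy X Y /\
     phi eps px py X0 Y0 - phi (eps+2*s) qx qy X Y >= - (r/5) /\
     ((~ Rabs (Y0-py) <= eps \/ (Y-Y0)^2 <= r^2/2) ->
        phi eps px py X0 Y0 - phi (eps+2*s) qx qy X Y >= r/2).
Proof.
  intros Hr Hr2 Hs Hs1 Hse He Hpx Hpy HX0 HY0 HX HY Hmv [Hwall Hph] Hnc.
  set (dy := Y - py).
  set (beta := sqrt (r^2 - dy^2)).
  destruct (sqrt_facts (r^2 - dy^2)) as [Hb0 [Hbsq Hbz]]. fold beta in Hb0, Hbsq, Hbz.
  assert (Hbr : beta <= r).
  { destruct (Rle_dec (dy^2) (r^2)). assert (beta*beta = r^2-dy^2) by (apply Hbsq; lra).
    apply ge_of_sq; [lra|]. assert (0 <= dy^2) by (apply pow2_ge_0). simpl in *; lra.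
    rewrite Hbz by lra; lra. }
  set (m := Rmin (X - r/10) (px + beta)).
  assert (Hm1 : m <= X - r/10) by apply Rmin_l.
  assert (Hm2 : m <= px + beta) by apply Rmin_r.
  assert (Hm3 : m = X - r/10 \/ m = px + beta).
  { unfold m, Rmin; destruct (Rle_dec (X - r/10) (px+beta)); auto. }
  set (tx := Rmax 0 m).
  assert (Htx0 : 0 <= tx) by apply Rmax_l.
  assert (Htxm : m <= tx) by apply Rmax_r.
  assert (Htx3 : (m <= 0 /\ tx = 0) \/ (m > 0 /\ tx = m)).
  { unfold tx, Rmax; destruct (Rle_dec 0 m).
    - destruct (Req_dec m 0); [left|right]; split; lra.
    - left; split; lra. }
  set (h := tx - px).
  assert (Hhb : h <= beta).
  { unfold h; destruct Htx3 as [[_ ->]|[_ ->]]; lra. }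
  assert (Hhp : h >= - px) by (unfold h; lra).
  assert (Hhl : h >= - (r/10)).
  { destruct Hwall as [Hw|Hw].
    - lra.
    - destruct Hph as [Hp|[Hp _]].
      + apply abs_le_iff in Hp.
        assert (Hg : X - px >= 0) by (apply (side r s eps px py X0 Y0 X Y); try lra).
        unfold h. destruct Hm3 as [E|E]; rewrite E in Htxm; lra.
      + lra. }
  assert (Hhr : h*h <= r*r) by (apply sq_le; lra).
  set (V := sqrt (r^2 - h^2)).
  destruct (sqrt_facts (r^2 - h^2)) as [HV0 [HVsq _]]. fold V in HV0, HVsq.
  assert (HVV : V*V = r^2 - h^2) by (apply HVsq; simpl; lra).
  clear HVsq.
  set (v := Rmax (-V) (Rmin dy V)).
  assert (Hv : (-V <= dy <= V /\ v = dy) \/ (dy > V /\ v = V) \/ (dy < -V /\ v = -V)).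
  { unfold v, Rmax, Rmin. destruct (Rle_dec dy V); destruct (Rle_dec (-V) dy);
    destruct (Rle_dec (-V) V); lra. }

  assert (Hdyd : dy = (Y0 - py) + (Y - Y0)) by (unfold dy; ring).
  assert (Hbb : (Y-Y0)*(Y-Y0) <= r*r) by (apply (sq_drop (X-X0)); simpl; lra).
  assert (P2 : Rabs (Y0 - py) <= eps -> h >= beta - r/10).
  { intro Hp. apply abs_le_iff in Hp.
    destruct (Rge_dec (X - px) 0) as [Hg|Hg].
    - assert (beta <= X - px).
      { destruct (Rle_dec (dy^2) (r^2)).
        + assert (beta*beta = r^2-dy^2) by (apply Hbsq; lra).
          left. apply lt_of_sq; [lra|lra|]. rewrite H. apply (nc_beta (X-px) dy r); [exact Hnc|reflexivity].
        + rewrite Hbz by lra. lra. }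
      unfold h. destruct Hm3 as [E|E]; rewrite E in Htxm; lra.
    - destruct Hwall as [Hw|Hw].
      + assert (beta < s).
        { destruct (Rle_dec (dy^2) (r^2)).
          + assert (beta*beta = r^2-dy^2) by (apply Hbsq; lra).
            apply lt_of_sq; [lra|lra|]. rewrite H. apply (nc_beta2 (X-px) dy r _ s); [lra|lra|exact Hnc|reflexivity].
          + rewrite Hbz by lra. lra. }
        lra.
      + exfalso. assert (X - px >= 0) by (apply (side r s eps px py X0 Y0 X Y); lra). lra. }
  assert (P3 : Rabs (Y0 - py) <= eps -> dy <= V + eps + s /\ - dy <= V + eps + s).
  { intro Hp. apply abs_le_iff in Hp.
    assert (Hbs : (Y-Y0)*(Y-Y0) <= (V+s)*(V+s) -> dy <= V + eps + s /\ - dy <= V + eps + s).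
    { intro Hq. assert (-(V+s) <= Y - Y0 <= V+s) by (apply sq_bound; lra). lra. }
    destruct (Rle_dec 0 h) as [Hh|Hh].
    - destruct (Rle_dec (dy^2) (r^2)).
      + assert (beta*beta = r^2-dy^2) by (apply Hbsq; lra).
        destruct (dyV dy r beta h V) as [D1 D2]; try lra.
        split; [apply Rle_trans with V; [apply ge_of_sq; lra|lra]|].
        apply Rle_trans with V; [apply ge_of_sq; lra|lra].
      + assert (beta = 0) by (apply Hbz; lra).
        assert (h = 0) by lra.
        assert (V = r) by (apply sq_eq_r; [lra|lra|rewrite HVV; rewrite H0; simpl; ring]).
        apply Hbs. apply (bVs _ r); lra.
    - assert (Hxm : X - r/10 < px /\ h >= X - r/10 - px).
      { unfold h in *. destruct Htx3 as [[Hm0 Ht]|[Hm0 Ht]].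
        - destruct Hm3 as [E|E]; rewrite E in *; lra.
        - destruct Hm3 as [E|E]; rewrite E in *; lra. }
      destruct Hwall as [Hw|Hw].
      + assert (r - s <= V) by (apply (Vbig r s h V); try lra; apply sq_le; lra).
        apply Hbs. apply (bVs _ r); lra.
      + assert (Hg : X - px >= 0) by (apply (side r s eps px py X0 Y0 X Y); lra).
        destruct (Rle_dec 0 (X - X0)) as [Ha|Ha].
        * assert (r - s <= V) by (apply (Vbig r s h V); try lra; apply sq_le; lra).
          apply Hbs. apply (bVs _ r); lra.
        * apply Hbs.
          destruct (P3_hard_call r s eps X0 Y0 X Y px py h V Hmv Hnc HVV) as [Q1 [Q2 Q3]].
          apply (P3_hard r s eps (X-X0) (Y-Y0) (Y0-py) h V (X-px)); try lra. }
  assert (P4 : px <= eps -> Y0 - py > eps ->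
     v = dy \/ (v = V /\ dy > V /\ h <= 0 /\ V >= r - eps)).
  { intros Hp1 Hp2.
    destruct (Rle_dec h 0) as [Hh|Hh].
    - assert (r - eps <= V) by (apply (Vbig r eps h V); try lra; apply sq_le; lra).
      destruct Hv as [[_ E]|[[E1 E]|[E1 E]]].
      + left; exact E.
      + right; repeat split; lra.
      + exfalso. assert (-r <= Y - Y0 <= r) by (apply sq_bound; lra). lra.
    - left. assert (beta > 0) by lra.
      destruct (Rle_dec (dy^2) (r^2)).
      + assert (beta*beta = r^2-dy^2) by (apply Hbsq; lra).
        destruct (dyV dy r beta h V) as [D1 D2]; try lra.
        assert (dy <= V) by (apply ge_of_sq; lra).
        assert (-dy <= V) by (apply ge_of_sq; lra).
        destruct Hv as [[_ E]|[[E1 E]|[E1 E]]]; [exact E|lra|lra].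
      + assert (beta = 0) by (apply Hbz; lra). lra. }
  exists tx, (py + v).
  assert (Hvv : v*v <= V*V /\ 0 <= py + v <= 1).
  { split; [apply (vV v V dy); assumption|].
    destruct Hv as [[E1 E]|[[E1 E]|[E1 E]]]; rewrite E; unfold dy in *; lra. }
  split; [split; [|tauto]|split].
  { split; [lra|]. destruct Htx3 as [[_ E]|[_ E]]; rewrite E; lra. }
  { replace (tx - px) with h by (unfold h; ring). replace (py + v - py) with v by ring.
    simpl. lra. }
  intros qx qy Hqx Hqy Hq.
  apply sum_sq_le in Hq as [Hq1 Hq2]; [|lra].
  assert (HnW : qx <= s \/ X - qx >= r/10 - s).
  { destruct Htx3 as [[_ E]|[_ E]]; [left|right]; lra. }
  assert (HYq : Y - qy = (dy - v) - (qy - (py + v))) by (unfold dy; ring).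
  unfold phi, cinv.
  destruct (Rle_dec (Rabs (Y0 - py)) eps) as [Hp|Hp].
  - assert (Hdv : -(eps+s) <= dy - v <= eps + s).
    { destruct (P3 Hp) as [A1 A2].
      destruct Hv as [[E1 E]|[[E1 E]|[E1 E]]]; rewrite E; lra. }
    assert (Hn : Rabs (Y - qy) <= eps + 2*s) by (apply abs_le_iff; lra).
    destruct (Rle_dec (Rabs (Y - qy)) (eps + 2*s)) as [_|C]; [|contradiction].
    assert (Hg := P2 Hp).
    split; [split; [exact HnW|left; exact Hn]|].
    assert (Hgain : 1 - px - (1 - qx) >= beta - r/10 - s) by (unfold h in Hg; lra).
    split; [lra|].
    intros [C|Hb2]; [contradiction|].
    apply abs_le_iff in Hp.
    assert (Hdy2 : dy*dy <= 51/100*r*r).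
    { rewrite Hdyd. apply dy2b with eps; lra. }
    assert (Hbeta : 7/10*r <= beta).
    { assert (dy^2 <= r^2) by (apply dy2_le; lra).
      assert (beta*beta = r^2-dy^2) by (apply Hbsq; lra).
      apply beta_big with dy; lra. }
    lra.
  - destruct Hph as [C|[Hp1 Hp2]]; [contradiction|].
    destruct (P4 Hp1 Hp2) as [E|[E1 [E2 [E3 E4]]]].
    + assert (Hn : Rabs (Y - qy) <= eps + 2*s) by (apply abs_le_iff; rewrite E in HYq; lra).
      destruct (Rle_dec (Rabs (Y - qy)) (eps + 2*s)) as [_|C]; [|contradiction].
      split; [split; [exact HnW|left; exact Hn]|].
      split; lra.
    + destruct (Rle_dec (Rabs (Y - qy)) (eps + 2*s)) as [Hn|Hn].
      * split; [split; [exact HnW|left; exact Hn]|]. split; lra.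
      * assert (Hpos : Y - qy > eps + 2*s).
        { rewrite abs_le_iff in Hn. rewrite E1 in HYq. lra. }
        split; [split; [exact HnW|right; split; [unfold h in E3; lra|lra]]|].
        rewrite E1 in Hq2. split; lra.
Qed.




Lemma edist_le_iff p q rho : 0 <= rho ->
  (edist p q <= rho <-> (fst p - fst q)^2 + (snd p - snd q)^2 <= rho^2).
Proof.
  intros Hr. unfold edist.
  assert (HS : 0 <= (fst p - fst q)^2 + (snd p - snd q)^2)
    by (assert (0 <= (fst p - fst q)^2) by apply pow2_ge_0;
        assert (0 <= (snd p - snd q)^2) by apply pow2_ge_0; lra).
  split; intro H.
  - rewrite <- (pow2_sqrt _ HS). apply pow_incr. split; [apply sqrt_pos|exact H].
  - rewrite <- (sqrt_pow2 rho Hr). apply sqrt_le_1_alt. exact H.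
Qed.

Lemma sqsym a b : (a - b)^2 = (b - a)^2.
Proof. ring. Qed.

Definition Good r s eps (P1 P2 R0 : pt) : Prop :=
  cinv r s eps (snd P1) (fst P1) (snd R0) (fst R0) /\
  cinv r s eps (fst P2) (snd P2) (fst R0) (snd R0).

Definition Phi eps (P1 P2 R0 : pt) : R :=
  phi eps (snd P1) (fst P1) (snd R0) (fst R0) + phi eps (fst P2) (snd P2) (fst R0) (snd R0).

Lemma phi_nonneg eps px py X0 Y0 : px <= 1 -> py <= 1 -> 0 <= phi eps px py X0 Y0.
Proof. intros. unfold phi. destruct Rle_dec; lra. Qed.

Lemma step r s eps n (x : nat -> pt) (P1 P2 R0 R : pt) :
  0 < r -> r <= 3/2 -> 0 < s -> s <= r/1000000 -> s <= eps -> eps <= r/1000 ->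
  (forall i, (i < n)%nat -> in_unit_square (x i)) -> condM n x r s ->
  in_unit_square P1 -> in_unit_square P2 -> in_unit_square R0 -> in_unit_square R ->
  (fst R - fst R0)^2 + (snd R - snd R0)^2 <= r^2 ->
  Good r s eps P1 P2 R0 ->
  (fst R - fst P1)^2 + (snd R - snd P1)^2 > r^2 ->
  (fst R - fst P2)^2 + (snd R - snd P2)^2 > r^2 ->
  exists i1 i2, (i1 < n)%nat /\ (i2 < n)%nat /\ in_ball P1 r (x i1) /\ in_ball P2 r (x i2) /\
    Good r s (eps + 2*s) (x i1) (x i2) R /\
    Phi (eps + 2*s) (x i1) (x i2) R <= Phi eps P1 P2 R0 - r/4.
Proof.
  intros Hr Hr2 Hs Hs1 Hse He hx hM HP1 HP2 HR0 HR Hmv [G1 G2] N1 N2.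
  destruct HP1 as [HP1a HP1b]. destruct HP2 as [HP2a HP2b].
  destruct HR0 as [HR0a HR0b]. destruct HR as [HRa HRb].
  destruct (cop_step r s eps (snd P1) (fst P1) (snd R0) (fst R0) (snd R) (fst R))
    as [tx1 [ty1 [[T1a T1b] [T1c T1d]]]]; try lra; auto.
  destruct (cop_step r s eps (fst P2) (snd P2) (fst R0) (snd R0) (fst R) (snd R))
    as [tx2 [ty2 [[T2a T2b] [T2c T2d]]]]; try lra; auto.
  destruct (hM P1 (ty1, tx1)) as [i1 [Hi1 [B1 C1]]].
  { split; lra. } { split; simpl; lra. }
  { unfold in_ball. apply edist_le_iff; [lra|]. cbn [fst snd].
    rewrite (sqsym (fst P1)), (sqsym (snd P1)). lra. }
  destruct (hM P2 (tx2, ty2)) as [i2 [Hi2 [B2 C2]]].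
  { split; lra. } { split; simpl; lra. }
  { unfold in_ball. apply edist_le_iff; [lra|]. cbn [fst snd].
    rewrite (sqsym (fst P2)), (sqsym (snd P2)). lra. }
  exists i1, i2. do 4 (split; [assumption|]).
  unfold in_ball in C1, C2. apply edist_le_iff in C1; [|lra]. apply edist_le_iff in C2; [|lra].
  cbn [fst snd] in C1, C2.
  destruct (hx i1 Hi1) as [X1a X1b]. destruct (hx i2 Hi2) as [X2a X2b].
  assert (C1' : (snd (x i1) - tx1)^2 + (fst (x i1) - ty1)^2 <= s^2).
  { pose proof (sqsym (snd (x i1)) tx1). pose proof (sqsym (fst (x i1)) ty1). lra. }
  destruct (T1d (snd (x i1)) (fst (x i1)) X1b X1a C1') as [Q1 [Q2 Q3]].
  assert (C2' : (fst (x i2) - tx2)^2 + (snd (x i2) - ty2)^2 <= s^2).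
  { pose proof (sqsym (snd (x i2)) ty2). pose proof (sqsym (fst (x i2)) tx2). lra. }
  destruct (T2d (fst (x i2)) (snd (x i2)) X2a X2b C2') as [U1 [U2 U3]].
  split; [split; assumption|].
  unfold Phi.
  destruct (Rle_dec ((fst R - fst R0)^2) (r^2/2)) as [Hb|Hb].
  - assert (Q3' := Q3 (or_intror Hb)). lra.
  - assert ((snd R - snd R0)^2 <= r^2/2) by lra.
    assert (U3' := U3 (or_intror H)). lra.
Qed.


Lemma edist_refl p : edist p p = 0.
Proof. unfold edist. replace ((fst p - fst p)^2 + (snd p - snd p)^2) with 0 by ring. apply sqrt_0. Qed.

Lemma noncap_of p q r : 0 <= r -> ~ edist p q <= r -> (fst q - fst p)^2 + (snd q - snd p)^2 > r^2.
Proof.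
  intros Hr H. destruct (Rle_dec ((fst p - fst q)^2 + (snd p - snd q)^2) (r^2)) as [H1|H1].
  - exfalso. apply H. apply edist_le_iff; auto.
  - rewrite (sqsym (fst q)), (sqsym (snd q)). lra.
Qed.

Lemma move_of p q r : 0 <= r -> edist p q <= r -> (fst q - fst p)^2 + (snd q - snd p)^2 <= r^2.
Proof.
  intros Hr H. apply edist_le_iff in H; auto. rewrite (sqsym (fst q)), (sqsym (snd q)). lra.
Qed.

Lemma eps_bound eps s r k : 0 < s -> eps + 2*s*INR k <= r/1000 -> eps <= r/1000.
Proof. intros. pose proof (pos_INR k). nra. Qed.

Lemma win r s n (x : nat -> pt)
  (hx : forall i, (i < n)%nat -> in_unit_square (x i)) (hM : condM n x r s)
  (Hr : 0 < r) (Hr2 : r <= 3/2) (Hs : 0 < s) (Hs1 : s <= r/1000000) :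
  forall K eps c rb0 rb, (c 0 < n)%nat -> (c 1 < n)%nat -> (rb0 < n)%nat -> (rb < n)%nat ->
  s <= eps -> eps + 2*s*INR K <= r/1000 ->
  Phi eps (x (c 0%nat)) (x (c 1%nat)) (x rb0) <= INR K * (r/4) ->
  Good r s eps (x (c 0%nat)) (x (c 1%nat)) (x rb0) ->
  edist (x rb0) (x rb) <= r ->
  CopTurn n (geo_adj x r) 2 c rb.
Proof.
  induction K as [|K IH]; intros eps c rb0 rb Hc0 Hc1 Hrb0 Hrb Hse HeK HPhi HG Hmv.
  all: destruct (Rle_dec (edist (x (c 0%nat)) (x rb)) r) as [Cap0|NC0];
    [ apply ct_move with (c' := fun j => if Nat.eqb j 0 then rb else c j);
      [ intros j Hj; destruct j as [|j];
        [ simpl; split; [exact Hrb| right; exact Cap0]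
        | destruct j as [|j]; [simpl; split; [exact Hc1|left; reflexivity]| lia]]
      | apply rt_cap; exists 0%nat; split; [lia|reflexivity]]
    | ].
  all: destruct (Rle_dec (edist (x (c 1%nat)) (x rb)) r) as [Cap1|NC1];
    [ apply ct_move with (c' := fun j => if Nat.eqb j 1 then rb else c j);
      [ intros j Hj; destruct j as [|j];
        [ simpl; split; [exact Hc0|left; reflexivity]
        | destruct j as [|j]; [simpl; split; [exact Hrb| right; exact Cap1]| lia]]
      | apply rt_cap; exists 1%nat; split; [lia|reflexivity]]
    | ].
  all: assert (HeK' : eps <= r/1000) by (eapply eps_bound; eauto).
  all: assert (Hr0 : 0 <= r) by lra.
  all: destruct (step r s eps n x (x (c 0%nat)) (x (c 1%nat)) (x rb0) (x rb) Hr Hr2 Hs Hs1 Hse HeK' hx hM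
         (hx _ Hc0) (hx _ Hc1) (hx _ Hrb0) (hx _ Hrb) (move_of _ _ r Hr0 Hmv) HG
         (noncap_of _ _ r Hr0 NC0) (noncap_of _ _ r Hr0 NC1)) as
      [i1 [i2 [Hi1 [Hi2 [B1 [B2 [HG' HPhi']]]]]]].
  all: destruct (hx i1 Hi1) as [X1a X1b]; destruct (hx i2 Hi2) as [X2a X2b].
  all: assert (Hnn : 0 <= Phi (eps + 2*s) (x i1) (x i2) (x rb))
    by (unfold Phi; pose proof (phi_nonneg (eps+2*s) (snd (x i1)) (fst (x i1)) (snd (x rb)) (fst (x rb)));
        pose proof (phi_nonneg (eps+2*s) (fst (x i2)) (snd (x i2)) (fst (x rb)) (snd (x rb))); lra).
  - simpl in HPhi. lra.
  - apply ct_move with (c' := fun j => if Nat.eqb j 0 then i1 else i2).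
    + intros j Hj. destruct j as [|j]; simpl.
      * split; [exact Hi1|right; exact B1].
      * destruct j as [|j]; [simpl; split; [exact Hi2|right; exact B2]|lia].
    + apply rt_move. intros rb' [Hlt Hm].
      apply (IH (eps + 2*s) _ rb); simpl; auto; try lra.
      * rewrite S_INR in HeK. lra.
      * rewrite S_INR in HPhi. lra.
      * destruct Hm as [-> | Hm]; [rewrite edist_refl; lra| exact Hm].
Qed.


Lemma phi_le3 eps px py X0 Y0 : 0 <= px -> 0 <= py -> phi eps px py X0 Y0 <= 3.
Proof. intros. unfold phi. destruct Rle_dec; lra. Qed.

Lemma lt_div_mul x y z : 0 < y -> x < z / y -> x*y < z.
Proof. intros. apply Rmult_lt_compat_r with (r := y) in H0; auto.
  replace (z / y * y) with z in H0 by (field; lra). exact H0. Qed.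

Lemma budget s r t k : 0 < r -> 0 < s -> s < r^2/10^10 -> t * r = 24 -> k <= t + 1 -> r <= 3/2 ->
  s + 2*s*k <= r/1000.
Proof.
  intros Hr Hs Hsr Ht Hk Hr2.
  assert (Hsr' : s * 10^10 < r^2) by (apply lt_div_mul; [simpl; lra|exact Hsr]).
  assert (H1 : s*k <= s*t + s) by nra.
  assert (H2 : s*t*r < 24*r^2/10^10) by (rewrite Rmult_assoc, Ht; simpl in *; lra).
  assert (H3 : s*t < 24*r/10^10) by (simpl in *; nra).
  simpl in *; nra.
Qed.

Theorem mainTheorem8 (n : nat) (x : nat -> pt) (r s : R)
  (hx : forall i, (i < n)%nat -> in_unit_square (x i))
  (hs0 : 0 < s) (hsr2 : s < r ^ 2 / 10 ^ 10) (hrs : s <= r)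
  (hM : condM n x r s) :
  cop_number_le n (geo_adj x r) 2.
Proof.
  assert (Hr : 0 < r) by lra.
  destruct (hM (0,0) (0,0)) as [v0 [Hv0 [_ Bv0]]].
  { split; simpl; lra. } { split; simpl; lra. }
  { unfold in_ball. rewrite edist_refl. lra. }
  exists 2%nat. split; [lia|].
  exists (fun _ => v0). split; [intros; exact Hv0|].
  intros rb Hrb.
  destruct (hx v0 Hv0) as [V0a V0b]. destruct (hx rb Hrb) as [Ra Rb].
  destruct (Rle_dec r (3/2)) as [Hr2|Hr2].
  - assert (Hs1 : s <= r/1000000).
    { assert (s * 10^10 < r^2) by (apply lt_div_mul; [simpl; lra|exact hsr2]). simpl in *. nra. }
    unfold in_ball in Bv0. apply edist_le_iff in Bv0; [|lra]. simpl in Bv0.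
    assert (Hv0s : fst (x v0) <= s /\ snd (x v0) <= s).
    { apply sum_sq_le in Bv0; lra. }
    set (t := 24 / r).
    assert (Ht : t * r = 24) by (unfold t; field; lra).
    destruct (archimed t) as [U1 U2].
    assert (Hup : (0 <= up t)%Z).
    { apply le_IZR. assert (0 < t) by (unfold t; apply Rdiv_lt_0_compat; lra). lra. }
    set (K := Z.to_nat (up t)).
    assert (HK : INR K = IZR (up t)) by (unfold K; rewrite INR_IZR_INZ, Z2Nat.id; auto).
    apply (win r s n x hx hM Hr Hr2 hs0 Hs1 K s (fun _ => v0) rb rb); auto.
    + lra.
    + apply budget with t; auto; lra.
    + unfold Phi. pose proof (phi_le3 s (snd (x v0)) (fst (x v0)) (snd (x rb)) (fst (x rb))).
      pose proof (phi_le3 s (fst (x v0)) (snd (x v0)) (fst (x rb)) (snd (x rb))).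
      assert (6 <= INR K * (r/4)) by (rewrite HK; nra). lra.
    + unfold Good, cinv. split; split; try (left; lra).
      * destruct (Rle_dec (fst (x rb) - fst (x v0)) s);
          [left; apply abs_le_iff; lra | right; lra].
      * destruct (Rle_dec (snd (x rb) - snd (x v0)) s);
          [left; apply abs_le_iff; lra | right; lra].
    + rewrite edist_refl; lra.
  - apply ct_move with (c' := fun _ => rb).
    + intros j Hj. split; [exact Hrb|right].
      unfold geo_adj. apply edist_le_iff; [lra|].
      assert ((fst (x v0) - fst (x rb))^2 <= 1) by (simpl; nra).
      assert ((snd (x v0) - snd (x rb))^2 <= 1) by (simpl; nra).
      assert (2 <= r^2) by (simpl; nra). lra.
    + apply rt_cap. exists 0%nat. split; [lia|reflexivity].
Qed.
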